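(* Let $\mathfrak{g}_1$ and $\mathfrak{g}_2$ be characteristically nilpotent Lie algebras which are both $S$-algebras. Then the product by generators $\mathfrak{g}_1 \underline{\times} \mathfrak{g}_2$ is also a characteristically nilpotent Lie algebra.
   Context: All Lie algebras are finite-dimensional, complex, nilpotent and nonabelian. For a Lie algebra $\mathfrak{g}$ write $C^1\mathfrak{g}=[\mathfrak{g},\mathfrak{g}]$, $C^{k+1}\mathfrak{g}=[\mathfrak{g},C^k\mathfrak{g}]$, and $Z(\mathfrak{g})$ for the center. A nilpotent Lie algebra $\mathfrak{g}$ is characteristically nilpotent if there is $m$ with $\mathfrak{g}^{[m]}=0$, where $\mathfrak{g}^{[1]}=\mathrm{Der}(\mathfrak{g})(\mathfrak{g})=\{f(Y): f\in \mathrm{Der}(\mathfrak{g}), Y\in\mathfrak{g}\}$ and $\mathfrak{g}^{[k]}=\mathrm{Der}(\mathfrak{g})(\mathfrak{g}^{[k-1]})$ (equivalently, $\mathrm{Der}(\mathfrak{g})$ is nilpotent). Product by generators: let $\mathfrak{g}_1,\mathfrak{g}_2$ have dimensions $m_1,m_2$, with bases $\{X_1,\dots,X_{m_1}\}$ of $\mathfrak{g}_1$ and $\{X'_1,\dots,X'_{m_2}\}$ of $\mathfrak{g}_2$ such that $X_1,\dots,X_{n_1}$ generate $\mathfrak{g}_1$ and $X_{n_1+1},\dots,X_{m_1}$ span $C^1\mathfrak{g}_1$, and similarly $X'_1,\dots,X'_{n_2}$ generate $\mathfrak{g}_2$ and the remaining $X'_j$ span $C^1\mathfrak{g}_2$.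 Then $\mathfrak{g}_1\underline{\times}\mathfrak{g}_2$ is the Lie algebra on the vector space $\mathfrak{g}_1\oplus\mathfrak{g}_2\oplus\mathfrak{g}_3$, $\mathfrak{g}_3=\langle Z_1,\dots,Z_{n_1n_2}\rangle$, whose brackets are those of $\mathfrak{g}_1$ on $\mathfrak{g}_1$, those of $\mathfrak{g}_2$ on $\mathfrak{g}_2$, $[X_i,X'_j]=Z_{(i-1)n_2+j}$ for $1\le i\le n_1$, $1\le j\le n_2$, $[X_i,X'_j]=0$ if $i>n_1$ or $j>n_2$, and $\mathfrak{g}_3$ central (this is the central extension of $\mathfrak{g}_1\oplus\mathfrak{g}_2$ by the 2-cocycle $\varphi(X_i,X'_j)=e_{(i-1)n_2+j}$ with values in $\mathbb{C}^{n_1n_2}$). For $i=1,2,3$ let $p_i$ be the projection of $\mathfrak{g}_1\underline{\times}\mathfrak{g}_2=\mathfrak{g}_1\oplus\mathfrak{g}_2\oplus\mathfrak{g}_3$ onto $\mathfrak{g}_i$, and for a derivation $D$ write $D_{ij}=p_iDp_j$. A nilpotent Lie algebra $\mathfrak{g}_1$ is an $S$-algebra if for every Lie algebra $\mathfrak{g}_2$ and every derivation $D$ of $\mathfrak{g}_1\underline{\times}\mathfrak{g}_2$ one has $D_{21}(\mathfrak{g}_1)\subset C^1\mathfrak{g}_2$. *)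

(* Defs.v *)
From HB Require Import structures.
From mathcomp Require Import all_boot all_order all_algebra.
From mathcomp Require Import complex reals.
Set Implicit Arguments. Unset Strict Implicit. Unset Printing Implicit Defensive.
Import GRing.Theory.
Local Open Scope ring_scope.

Notation CC R := (complex (Real.sort R)).

Section LieDefs.
Variable F : fieldType.

Definition is_lie n (br : 'rV[F]_n -> 'rV[F]_n -> 'rV[F]_n) : Prop :=
  [/\ (forall (a : F) x y z, br (a *: x + y) z = a *: br x z + br y z),
      (forall (a : F) x y z, br x (a *: y + z) = a *: br x y + br x z),
      (forall x, br x x = 0) &
      (forall x y z, br x (br y z) + br y (br z x) + br z (br x y) = 0)].

Definition inspan n (P : 'rV[F]_n -> Prop) (v : 'rV[F]_n) : Prop :=
  exists s : seq (F * 'rV[F]_n),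
    (forall p, p \in s -> P p.2) /\ v = \sum_(p <- s) p.1 *: p.2.

Fixpoint lcs n (br : 'rV[F]_n -> 'rV[F]_n -> 'rV[F]_n) (k : nat)
  : 'rV[F]_n -> Prop :=
  match k with
  | 0 => fun _ => True
  | k'.+1 => inspan (fun u => exists x y, lcs br k' y /\ u = br x y)
  end.

Definition nilpotent n (br : 'rV[F]_n -> 'rV[F]_n -> 'rV[F]_n) : Prop :=
  exists k, forall v, lcs br k v -> v = 0.

Definition nonabelian n (br : 'rV[F]_n -> 'rV[F]_n -> 'rV[F]_n) : Prop :=
  exists x y, br x y <> 0.

Definition is_der n (br : 'rV[F]_n -> 'rV[F]_n -> 'rV[F]_n) (D : 'M[F]_n) :=
  forall x y, br x y *m D = br (x *m D) y + br x (y *m D).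

Fixpoint der_iter n (br : 'rV[F]_n -> 'rV[F]_n -> 'rV[F]_n) (k : nat)
  : 'rV[F]_n -> Prop :=
  match k with
  | 0 => fun _ => True
  | k'.+1 => inspan (fun u => exists D y, [/\ is_der br D, der_iter br k' y &
                                               u = y *m D])
  end.

Definition char_nilpotent n (br : 'rV[F]_n -> 'rV[F]_n -> 'rV[F]_n) : Prop :=
  nilpotent br /\ exists m, forall v, der_iter br m v -> v = 0.

Definition nil_lie n (br : 'rV[F]_n -> 'rV[F]_n -> 'rV[F]_n) : Prop :=
  [/\ is_lie br, nilpotent br & nonabelian br].

Definition generates n (br : 'rV[F]_n -> 'rV[F]_n -> 'rV[F]_n)
  (P : 'rV[F]_n -> Prop) : Prop :=
  forall Q : 'rV[F]_n -> Prop,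
    Q 0 -> (forall (a : F) x y, Q x -> Q y -> Q (a *: x + y)) ->
    (forall x y, Q x -> Q y -> Q (br x y)) ->
    (forall x, P x -> Q x) -> forall x, Q x.

(* Adapted basis on F^(n1 + r1): the first n1 standard basis vectors
   generate g and the last r1 standard basis vectors span C^1 g. *)
Definition adapted n1 r1 (br : 'rV[F]_(n1 + r1) -> 'rV[F]_(n1 + r1) -> 'rV[F]_(n1 + r1)) :=
  generates br (fun u => exists i : 'I_n1, u = row_mx (delta_mx 0 i) 0) /\
  (forall v, lcs br 1 v <-> lsubmx v = 0).

(* Product by generators g1 x g2 on F^((n1+r1) + (n2+r2) + n1*n2):
   [X_i, X'_j] = Z_{(i-1) n2 + j} for generators, g3 central. *)
Definition prod_gen n1 r1 n2 r2
  (br1 : 'rV[F]_(n1 + r1) -> 'rV[F]_(n1 + r1) -> 'rV[F]_(n1 + r1))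
  (br2 : 'rV[F]_(n2 + r2) -> 'rV[F]_(n2 + r2) -> 'rV[F]_(n2 + r2))
  (v w : 'rV[F]_((n1 + r1) + (n2 + r2) + n1 * n2))
  : 'rV[F]_((n1 + r1) + (n2 + r2) + n1 * n2) :=
  let v1 : 'rV_(n1 + r1) := lsubmx (lsubmx v) in
  let v2 : 'rV_(n2 + r2) := rsubmx (lsubmx v) in
  let w1 : 'rV_(n1 + r1) := lsubmx (lsubmx w) in
  let w2 : 'rV_(n2 + r2) := rsubmx (lsubmx w) in
  row_mx (row_mx (br1 v1 w1) (br2 v2 w2))
    (mxvec ((lsubmx v1)^T *m (lsubmx w2) - (lsubmx w1)^T *m (lsubmx v2))).

(* S-algebra: for every (nilpotent nonabelian) g2 with an adapted basis and
   every derivation D of g1 x g2, p2 D p1 (g1) is contained in C^1 g2. *)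
Definition S_algebra n1 r1
  (br1 : 'rV[F]_(n1 + r1) -> 'rV[F]_(n1 + r1) -> 'rV[F]_(n1 + r1)) : Prop :=
  forall n2 r2 (br2 : 'rV[F]_(n2 + r2) -> 'rV[F]_(n2 + r2) -> 'rV[F]_(n2 + r2)),
    nil_lie br2 -> adapted br2 ->
    forall D : 'M[F]_((n1 + r1) + (n2 + r2) + n1 * n2),
      is_der (prod_gen br1 br2) D ->
      forall x : 'rV[F]_(n1 + r1),
        lcs br2 1 (rsubmx (lsubmx (row_mx (row_mx x 0) 0 *m D))).

End LieDefs.

(* Main.v *)
Require Import Defs.
From HB Require Import structures.
From mathcomp Require Import all_boot all_order all_algebra.
From mathcomp Require Import complex reals.
From mathcomp Require Import zify.
Local Open Scope ring_scope.

Set Implicit Arguments. Unset Strict Implicit. Unset Printing Implicit Defensive.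
Import GRing.Theory.

Section Gen.
Variable F : fieldType.

Definition subsp n (P : 'rV[F]_n -> Prop) :=
  P 0 /\ forall (a : F) x y, P x -> P y -> P (a *: x + y).

Lemma subspD n (P : 'rV[F]_n -> Prop) : subsp P -> forall x y, P x -> P y -> P (x + y).
Proof. by case=> _ H x y Px Py; rewrite -[x]scale1r; apply: H. Qed.
Lemma subspZ n (P : 'rV[F]_n -> Prop) : subsp P -> forall a x, P x -> P (a *: x).
Proof. by case=> H0 H a x Px; rewrite -[a *: x]addr0; apply: H. Qed.
Lemma subspN n (P : 'rV[F]_n -> Prop) : subsp P -> forall x, P x -> P (- x).
Proof. by move=> sP x Px; rewrite -scaleN1r; apply: subspZ. Qed.
Lemma subspB n (P : 'rV[F]_n -> Prop) : subsp P -> forall x y, P x -> P y -> P (x - y).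
Proof. by move=> sP x y Px Py; apply: subspD => //; apply: subspN. Qed.

Lemma inspan_sub n (P Q : 'rV[F]_n -> Prop) : subsp Q -> (forall x, P x -> Q x) ->
  forall v, inspan P v -> Q v.
Proof.
move=> [Q0 QH] PQ v [s [Hs ->]]; elim: s Hs => [|p s IH] Hs; first by rewrite big_nil.
rewrite big_cons; apply: QH; first by apply: PQ; apply: Hs; rewrite inE eqxx.
by apply: IH => q qs; apply: Hs; rewrite inE qs orbT.
Qed.

Lemma inspan_subsp n (P : 'rV[F]_n -> Prop) : subsp (inspan P).
Proof.
split; first by exists [::]; rewrite big_nil.
move=> a x y [sx [Hx ->]] [sy [Hy ->]].
exists ([seq (a * p.1, p.2) | p <- sx] ++ sy); split.
  move=> p; rewrite mem_cat => /orP [/mapP [q qs ->]|]; [exact: (Hx q qs)| exact: Hy].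
by rewrite big_cat big_map /= scaler_sumr; congr (_ + _); apply: eq_bigr => p _; rewrite scalerA.
Qed.

Lemma inspan_in n (P : 'rV[F]_n -> Prop) x : P x -> inspan P x.
Proof. by move=> Px; exists [:: (1, x)]; split; [move=> p;  rewrite inE => /eqP -> //| rewrite big_seq1 scale1r]. Qed.

Lemma subsp_True n : subsp (fun _ : 'rV[F]_n => True). Proof. by []. Qed.

Lemma lcs_subsp n (br : 'rV[F]_n -> 'rV[F]_n -> 'rV[F]_n) k : subsp (lcs br k).
Proof. by case: k => [|k] //=; apply: inspan_subsp. Qed.
Lemma der_iter_subsp n (br : 'rV[F]_n -> 'rV[F]_n -> 'rV[F]_n) k : subsp (der_iter br k).
Proof. by case: k => [|k] //=; apply: inspan_subsp. Qed.

Lemma lcs_dec n (br : 'rV[F]_n -> 'rV[F]_n -> 'rV[F]_n) k v : lcs br k.+1 v -> lcs br k v.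
Proof.
elim: k v => [|k IH] v //=.
apply: inspan_sub; first exact: inspan_subsp.
by move=> u [x [y [Hy ->]]]; apply: inspan_in; exists x, y; split => //; apply: IH.
Qed.
Lemma lcs_mono n (br : 'rV[F]_n -> 'rV[F]_n -> 'rV[F]_n) k l v : (k <= l)%N -> lcs br l v -> lcs br k v.
Proof.
move=> kl; rewrite -(subnK kl); elim: (l - k)%N v => [|d IH] v //= H.
by apply: IH; apply: lcs_dec; rewrite -addSn.
Qed.
Lemma der_dec n (br : 'rV[F]_n -> 'rV[F]_n -> 'rV[F]_n) k v : der_iter br k.+1 v -> der_iter br k v.
Proof.
elim: k v => [|k IH] v //=.
apply: inspan_sub; first exact: inspan_subsp.
by move=> u [D [y [HD Hy ->]]]; apply: inspan_in; exists D, y; split => //; apply: IH.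
Qed.
Lemma der_mono n (br : 'rV[F]_n -> 'rV[F]_n -> 'rV[F]_n) k l v : (k <= l)%N -> der_iter br l v -> der_iter br k v.
Proof.
move=> kl; rewrite -(subnK kl); elim: (l - k)%N v => [|d IH] v //= H.
by apply: IH; apply: der_dec; rewrite -addSn.
Qed.
Lemma der_step n (br : 'rV[F]_n -> 'rV[F]_n -> 'rV[F]_n) k D v :
  is_der br D -> der_iter br k v -> der_iter br k.+1 (v *m D).
Proof. by move=> HD Hv; apply: inspan_in; exists D, v. Qed.

Section Bil.
Variables (n : nat) (br : 'rV[F]_n -> 'rV[F]_n -> 'rV[F]_n).
Hypothesis L : is_lie br.
Lemma br0l y : br 0 y = 0.
Proof.
case: L => H1 _ _ _; have := H1 1 0 0 y; rewrite !scale1r addr0 => /(congr1 (fun t => t - br 0 y)).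
by rewrite addrK subrr => /esym.
Qed.
Lemma br0r y : br y 0 = 0.
Proof.
case: L => _ H1 _ _; have := H1 1 y 0 0; rewrite !scale1r addr0 => /(congr1 (fun t => t - br y 0)).
by rewrite addrK subrr => /esym.
Qed.
Lemma brDl x y z : br (x + y) z = br x z + br y z.
Proof. by case: L => H1 _ _ _; have := H1 1 x y z; rewrite !scale1r. Qed.
Lemma brDr x y z : br z (x + y) = br z x + br z y.
Proof. by case: L => _ H1 _ _; have := H1 1 z x y; rewrite !scale1r. Qed.
Lemma brZl a x z : br (a *: x) z = a *: br x z.
Proof. by case: L => H1 _ _ _; have := H1 a x 0 z; rewrite br0l !addr0. Qed.
Lemma brZr a x z : br z (a *: x) = a *: br z x.
Proof. by case: L => _ H1 _ _; have := H1 a z x 0; rewrite br0r !addr0. Qed.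
Lemma brNl x z : br (- x) z = - br x z.
Proof. by rewrite -scaleN1r brZl scaleN1r. Qed.
Lemma brNr x z : br z (- x) = - br z x.
Proof. by rewrite -scaleN1r brZr scaleN1r. Qed.
End Bil.

End Gen.

Section Prod.
Variables (F : fieldType) (n1 r1 n2 r2 : nat).
Variable br1 : 'rV[F]_(n1 + r1) -> 'rV[F]_(n1 + r1) -> 'rV[F]_(n1 + r1).
Variable br2 : 'rV[F]_(n2 + r2) -> 'rV[F]_(n2 + r2) -> 'rV[F]_(n2 + r2).
Hypotheses (Li1 : is_lie br1) (Li2 : is_lie br2).
Local Notation N := (n1 + r1 + (n2 + r2) + n1 * n2)%N.
Local Notation br := (prod_gen br1 br2).
Local Notation V := 'rV[F]_N.

Lemma lsub0 m a b : lsubmx (0 : 'M[F]_(m, a + b)) = 0. Proof. exact: linear0. Qed.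
Lemma rsub0 m a b : rsubmx (0 : 'M[F]_(m, a + b)) = 0. Proof. exact: linear0. Qed.
Lemma mxvec0 m a : mxvec (0 : 'M[F]_(m, a)) = 0. Proof. exact: linear0. Qed.
Lemma mxvecD m a (x y : 'M[F]_(m, a)) : mxvec (x + y) = mxvec x + mxvec y. Proof. exact: linearD. Qed.
Lemma mxvecB m a (x y : 'M[F]_(m, a)) : mxvec (x - y) = mxvec x - mxvec y. Proof. exact: linearB. Qed.
Lemma mxvecZ m a c (x : 'M[F]_(m, a)) : mxvec (c *: x) = c *: mxvec x. Proof. exact: linearZ. Qed.
Lemma lsubD m a b (x y : 'M[F]_(m, a + b)) : lsubmx (x + y) = lsubmx x + lsubmx y. Proof. exact: linearD. Qed.
Lemma lsubB m a b (x y : 'M[F]_(m, a + b)) : lsubmx (x - y) = lsubmx x - lsubmx y. Proof. exact: linearB. Qed.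
Lemma lsubZ m a b c (x : 'M[F]_(m, a + b)) : lsubmx (c *: x) = c *: lsubmx x. Proof. exact: linearZ. Qed.

Definition p1 (v : V) : 'rV[F]_(n1 + r1) := lsubmx (lsubmx v).
Definition p2 (v : V) : 'rV[F]_(n2 + r2) := rsubmx (lsubmx v).
Definition p3 (v : V) : 'rV[F]_(n1 * n2) := rsubmx v.
Definition e1 (x : 'rV[F]_(n1 + r1)) : V := row_mx (row_mx x 0) 0.
Definition e2 (x : 'rV[F]_(n2 + r2)) : V := row_mx (row_mx 0 x) 0.
Definition e3 (x : 'rV[F]_(n1 * n2)) : V := row_mx 0 x.

Lemma p1e1 x : p1 (e1 x) = x. Proof. by rewrite /p1 /e1 !row_mxKl. Qed.
Lemma p2e1 x : p2 (e1 x) = 0. Proof. by rewrite /p2 /e1 row_mxKl row_mxKr. Qed.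
Lemma p3e1 x : p3 (e1 x) = 0. Proof. by rewrite /p3 /e1 row_mxKr. Qed.
Lemma p1e2 x : p1 (e2 x) = 0. Proof. by rewrite /p1 /e2 !row_mxKl. Qed.
Lemma p2e2 x : p2 (e2 x) = x. Proof. by rewrite /p2 /e2 row_mxKl row_mxKr. Qed.
Lemma p3e2 x : p3 (e2 x) = 0. Proof. by rewrite /p3 /e2 row_mxKr. Qed.
Lemma p1e3 x : p1 (e3 x) = 0. Proof. by rewrite /p1 /e3 row_mxKl linear0. Qed.
Lemma p2e3 x : p2 (e3 x) = 0. Proof. by rewrite /p2 /e3 row_mxKl linear0. Qed.
Lemma p3e3 x : p3 (e3 x) = x. Proof. by rewrite /p3 /e3 row_mxKr. Qed.

Lemma decomp v : v = e1 (p1 v) + e2 (p2 v) + e3 (p3 v).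
Proof.
by rewrite /e1 /e2 /e3 !add_row_mx !addr0 !add0r /p1 /p2 /p3 !hsubmxK.
Qed.
Lemma eqV v w : p1 v = p1 w -> p2 v = p2 w -> p3 v = p3 w -> v = w.
Proof. by move=> h1 h2 h3; rewrite (decomp v) (decomp w) h1 h2 h3. Qed.

Lemma p1D v w : p1 (v + w) = p1 v + p1 w. Proof. by rewrite /p1 !linearD. Qed.
Lemma p2D v w : p2 (v + w) = p2 v + p2 w. Proof. by rewrite /p2 !linearD. Qed.
Lemma p3D v w : p3 (v + w) = p3 v + p3 w. Proof. by rewrite /p3 !linearD. Qed.
Lemma p1Z a v : p1 (a *: v) = a *: p1 v. Proof. by rewrite /p1 !linearZ. Qed.
Lemma p2Z a v : p2 (a *: v) = a *: p2 v. Proof. by rewrite /p2 !linearZ. Qed.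
Lemma p3Z a v : p3 (a *: v) = a *: p3 v. Proof. by rewrite /p3 !linearZ. Qed.
Lemma p10 : p1 0 = 0. Proof. by rewrite /p1 !linear0. Qed.
Lemma p20 : p2 0 = 0. Proof. by rewrite /p2 !linear0. Qed.
Lemma p30 : p3 0 = 0. Proof. by rewrite /p3 !linear0. Qed.

Lemma p1_br v w : p1 (br v w) = br1 (p1 v) (p1 w).
Proof. by rewrite /p1 /prod_gen /= !row_mxKl. Qed.
Lemma p2_br v w : p2 (br v w) = br2 (p2 v) (p2 w).
Proof. by rewrite /p2 /prod_gen /= row_mxKl row_mxKr. Qed.
Lemma p3_br v w : p3 (br v w) =
  mxvec ((lsubmx (p1 v))^T *m lsubmx (p2 w) - (lsubmx (p1 w))^T *m lsubmx (p2 v)).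
Proof. by rewrite /p3 /prod_gen /= row_mxKr. Qed.

Lemma br_e1e1 x y : br (e1 x) (e1 y) = e1 (br1 x y).
Proof.
apply: eqV; rewrite ?p1_br ?p2_br ?p3_br ?p1e1 ?p2e1 ?p3e1 //.
  by rewrite br0l.
by rewrite !lsub0 !mulmx0 subrr mxvec0.
Qed.
Lemma br_e2e2 x y : br (e2 x) (e2 y) = e2 (br2 x y).
Proof.
apply: eqV; rewrite ?p1_br ?p2_br ?p3_br ?p1e2 ?p2e2 ?p3e2 //.
  by rewrite br0l.
by rewrite !lsub0 !trmx0 !mul0mx subrr mxvec0.
Qed.
Lemma br_e1e2 x y : br (e1 x) (e2 y) = e3 (mxvec ((lsubmx x)^T *m lsubmx y)).
Proof.
apply: eqV; rewrite ?p1_br ?p2_br ?p3_br ?p1e1 ?p2e1 ?p3e1 ?p1e2 ?p2e2 ?p3e2 ?p1e3 ?p2e3 ?p3e3 //.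
- by rewrite br0r.
- by rewrite br0l.
by rewrite !lsub0 trmx0 mul0mx subr0.
Qed.


Lemma e1D x y : e1 (x + y) = e1 x + e1 y. Proof. by rewrite /e1 !add_row_mx !addr0 ?add0r. Qed.
Lemma e2D x y : e2 (x + y) = e2 x + e2 y. Proof. by rewrite /e2 !add_row_mx !addr0 ?add0r. Qed.
Lemma e3D x y : e3 (x + y) = e3 x + e3 y. Proof. by rewrite /e3 !add_row_mx !addr0 ?add0r. Qed.
Lemma e1Z a x : e1 (a *: x) = a *: e1 x. Proof. by rewrite /e1 !scale_row_mx !scaler0. Qed.
Lemma e2Z a x : e2 (a *: x) = a *: e2 x. Proof. by rewrite /e2 !scale_row_mx !scaler0. Qed.
Lemma e3Z a x : e3 (a *: x) = a *: e3 x. Proof. by rewrite /e3 !scale_row_mx !scaler0. Qed.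
Lemma e10 : e1 0 = 0. Proof. by rewrite /e1 !row_mx0. Qed.
Lemma e20 : e2 0 = 0. Proof. by rewrite /e2 !row_mx0. Qed.
Lemma e30 : e3 0 = 0. Proof. by rewrite /e3 !row_mx0. Qed.

Lemma subsp_ker n m (f : 'rV[F]_n -> 'rV[F]_m) :
  (forall a x y, f (a *: x + y) = a *: f x + f y) -> subsp (fun x => f x = 0).
Proof.
move=> Hf; split.
  by have := Hf 1 0 0; rewrite scaler0 addr0 scale1r => /(congr1 (fun t => t - f 0)); rewrite addrK subrr => /esym.
by move=> a x y hx hy; rewrite Hf hx hy scaler0 addr0.
Qed.
Lemma subsp_and n (P Q : 'rV[F]_n -> Prop) : subsp P -> subsp Q -> subsp (fun x => P x /\ Q x).
Proof.
move=> [P0 HP] [Q0 HQ]; split => // a x y [? ?] [? ?]; split; [exact: HP| exact: HQ].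
Qed.
Lemma subsp_sum n (P : 'rV[F]_n -> Prop) I (r : seq I) (f : I -> 'rV[F]_n) :
  subsp P -> (forall i, P (f i)) -> P (\sum_(i <- r) f i).
Proof.
move=> sP Hf; elim: r => [|i r IH]; first by rewrite big_nil; case: sP.
by rewrite big_cons; apply: subspD.
Qed.

Section Adapted.
Variables (m s : nat) (b : 'rV[F]_(m + s) -> 'rV[F]_(m + s) -> 'rV[F]_(m + s)).
Hypothesis ad : adapted b.
Lemma lsub_br x y : lsubmx (b x y) = 0.
Proof. by case: ad => _ H; apply/H; apply: inspan_in; exists x, y. Qed.
Lemma C1_ind (Q : 'rV[F]_(m + s) -> Prop) : subsp Q -> (forall x y, Q (b x y)) ->
  forall x, lsubmx x = 0 -> Q x.
Proof.
move=> sQ HQ x; case: ad => _ H /H; apply: inspan_sub => // u [x1 [y1 [_ ->]]]; exact: HQ.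
Qed.
Lemma der_C1 D1 : is_der b D1 -> forall x : 'rV[F]_(m + s), lsubmx x = 0 -> lsubmx (x *m D1) = 0.
Proof.
move=> HD1; apply: (C1_ind (Q := fun x => lsubmx (x *m D1) = 0)).
  by apply: subsp_ker => a u w; rewrite mulmxDl -scalemxAl lsubD lsubZ.
by move=> x1 y1; rewrite HD1 lsubD !lsub_br addr0.
Qed.
End Adapted.

Section Der.
Variable D : 'M[F]_N.
Hypothesis HD : is_der br D.
Hypotheses (ad1 : adapted br1) (ad2 : adapted br2).
Hypothesis S1 : forall x, lsubmx (p2 (e1 x *m D)) = 0.
Hypothesis S2 : forall y, lsubmx (p1 (e2 y *m D)) = 0.

Definition E1 : 'M[F]_(n1 + r1, N) := row_mx (row_mx 1%:M 0) 0.
Definition P1 : 'M[F]_(N, n1 + r1) := col_mx (col_mx 1%:M 0) 0.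
Definition E2 : 'M[F]_(n2 + r2, N) := row_mx (row_mx 0 1%:M) 0.
Definition P2 : 'M[F]_(N, n2 + r2) := col_mx (col_mx 0 1%:M) 0.
Lemma mulE1 x : x *m E1 = e1 x. Proof. by rewrite /E1 !mul_mx_row mulmx1 !mulmx0. Qed.
Lemma mulE2 x : x *m E2 = e2 x. Proof. by rewrite /E2 !mul_mx_row mulmx1 !mulmx0. Qed.
Lemma mulP1 v : v *m P1 = p1 v.
Proof.
rewrite /P1 -{1}[v]hsubmxK mul_row_col mulmx0 addr0.
by rewrite -{1}[lsubmx v]hsubmxK mul_row_col mulmx1 mulmx0 addr0.
Qed.
Lemma mulP2 v : v *m P2 = p2 v.
Proof.
rewrite /P2 -{1}[v]hsubmxK mul_row_col mulmx0 addr0.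
by rewrite -{1}[lsubmx v]hsubmxK mul_row_col mulmx1 mulmx0 add0r.
Qed.
Definition D11 := E1 *m D *m P1.
Definition D22 := E2 *m D *m P2.
Lemma D11E x : x *m D11 = p1 (e1 x *m D). Proof. by rewrite /D11 !mulmxA mulE1 mulP1. Qed.
Lemma D22E x : x *m D22 = p2 (e2 x *m D). Proof. by rewrite /D22 !mulmxA mulE2 mulP2. Qed.
Lemma D11_der : is_der br1 D11.
Proof. by move=> x y; rewrite !D11E -br_e1e1 HD p1D !p1_br !p1e1. Qed.
Lemma D22_der : is_der br2 D22.
Proof. by move=> x y; rewrite !D22E -br_e2e2 HD p2D !p2_br !p2e2. Qed.

Lemma K1 x : lsubmx x = 0 -> p2 (e1 x *m D) = 0 /\ p3 (e1 x *m D) = 0.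
Proof.
move: x; apply: (C1_ind ad1 (Q := fun x => p2 (e1 x *m D) = 0 /\ p3 (e1 x *m D) = 0)).
  apply: subsp_and; apply: subsp_ker => a u w;
   by rewrite e1D e1Z mulmxDl -scalemxAl ?p2D ?p2Z ?p3D ?p3Z.
move=> x1 y1; rewrite -br_e1e1 HD p2D p3D !p2_br !p3_br !p2e1 !p1e1 (br0l Li2) (br0r Li2) addr0.
by rewrite !S1 !lsub0 ?mulmx0 ?trmx0 ?mul0mx ?subr0 ?sub0r ?oppr0 ?mxvec0 ?addr0.
Qed.
Lemma K2 y : lsubmx y = 0 -> p1 (e2 y *m D) = 0 /\ p3 (e2 y *m D) = 0.
Proof.
move: y; apply: (C1_ind ad2 (Q := fun x => p1 (e2 x *m D) = 0 /\ p3 (e2 x *m D) = 0)).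
  apply: subsp_and; apply: subsp_ker => a u w;
   by rewrite e2D e2Z mulmxDl -scalemxAl ?p1D ?p1Z ?p3D ?p3Z.
move=> x1 y1; rewrite -br_e2e2 HD p1D p3D !p1_br !p3_br !p1e2 !p2e2 (br0l Li1) (br0r Li1) addr0.
by rewrite !S2 !lsub0 ?mulmx0 ?trmx0 ?mul0mx ?subr0 ?sub0r ?oppr0 ?mxvec0 ?addr0.
Qed.

Definition G3 k := inspan (fun z : 'rV[F]_(n1 * n2) => exists a b p q,
  [/\ der_iter br1 p a, der_iter br2 q b, (k <= p + q)%N & z = mxvec ((lsubmx a)^T *m lsubmx b)]).

Lemma K3 k z : G3 k z ->
  [/\ lsubmx (p1 (e3 z *m D)) = 0, lsubmx (p2 (e3 z *m D)) = 0 & G3 k.+1 (p3 (e3 z *m D))].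
Proof.
have [G0 GH] : subsp (G3 k.+1) by exact: inspan_subsp.
have H : subsp (fun z => [/\ lsubmx (p1 (e3 z *m D)) = 0, lsubmx (p2 (e3 z *m D)) = 0 &
                           G3 k.+1 (p3 (e3 z *m D))]).
  split; first by rewrite e30 mul0mx p10 p20 p30 !lsub0.
  move=> c u w [h1 h2 h3] [h1' h2' h3']; rewrite e3D e3Z mulmxDl -scalemxAl p1D p1Z p2D p2Z p3D p3Z.
  by rewrite !lsubD !lsubZ h1 h2 h1' h2' !scaler0 !addr0; split => //; exact: GH.
move: z; apply: (inspan_sub H) => z' [a [b [p [q [Ha Hb Hk ->]]]]].
rewrite -br_e1e2 HD p1D p2D p3D !p1_br !p2_br !p3_br !lsubD !lsub_br // !addr0; split => //.
rewrite !p1e1 !p2e2 !p1e2 !p2e1 !lsub0 trmx0 mul0mx mulmx0 !subr0.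
apply: subspD; first exact: inspan_subsp.
  apply: inspan_in; exists (p1 (e1 a *m D)), b, p.+1, q; split => //.
  by rewrite -D11E; apply: der_step => //; exact: D11_der.
apply: inspan_in; exists a, (p2 (e2 b *m D)), p, q.+1; split => //.
  by rewrite -D22E; apply: der_step => //; exact: D22_der.
by rewrite addnS.
Qed.


Lemma G3_0 z : G3 0 z.
Proof.
have sG := inspan_subsp (fun z : 'rV[F]_(n1 * n2) => exists a b p q,
  [/\ der_iter br1 p a, der_iter br2 q b, (0 <= p + q)%N & z = mxvec ((lsubmx a)^T *m lsubmx b)]).
rewrite -[z]vec_mxK (matrix_sum_delta (vec_mx z)) linear_sum.
apply: subsp_sum => // i; rewrite linear_sum; apply: subsp_sum => // j.
rewrite linearZ; apply: subspZ => //; apply: inspan_in.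
exists (row_mx (delta_mx 0 i : 'rV[F]_n1) (0 : 'rV[F]_r1)),
       (row_mx (delta_mx 0 j : 'rV[F]_n2) (0 : 'rV[F]_r2)), 0%N, 0%N; split => //.
by rewrite !row_mxKl trmx_delta mul_delta_mx.
Qed.

Lemma L1 v : lsubmx (p1 (v *m D)) = lsubmx (p1 v *m D11).
Proof.
have [h _ _] := K3 (G3_0 (p3 v)).
by rewrite {1}(decomp v) !mulmxDl !p1D !lsubD S2 h !addr0 D11E.
Qed.
Lemma L2 v : lsubmx (p2 (v *m D)) = lsubmx (p2 v *m D22).
Proof.
have [_ h _] := K3 (G3_0 (p3 v)).
by rewrite {1}(decomp v) !mulmxDl !p2D !lsubD S1 h add0r addr0 D22E.
Qed.

Variable M : nat.
Hypothesis M0 : (0 < M)%N.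
Hypothesis HA : forall a, der_iter br1 M a -> a = 0.
Hypothesis HB : forall b, der_iter br2 M b -> b = 0.

Lemma G3_top z : G3 (M + M) z -> z = 0.
Proof.
move: z; apply: (inspan_sub (Q := fun z => z = 0)).
  by split => // c x y -> ->; rewrite scaler0 addr0.
move=> z [a [b [p [q [Ha Hb Hk ->]]]]].
have [hp|hp] := leqP M p.
  by rewrite (HA (der_mono hp Ha)) lsub0 trmx0 mul0mx mxvec0.
have hq : (M <= q)%N by lia.
by rewrite (HB (der_mono hq Hb)) lsub0 mulmx0 mxvec0.
Qed.

Definition Br1 j v := (exists a, der_iter br1 j a /\ lsubmx (p1 v - a) = 0) /\
                      (exists b, der_iter br2 j b /\ lsubmx (p2 v - b) = 0).
Definition Br2 k v := [/\ lsubmx (p1 v) = 0, lsubmx (p2 v) = 0 & G3 k (p3 v)].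
Definition Br3 i v := [/\ der_iter br1 i (p1 v), der_iter br2 i (p2 v),
                          lsubmx (p1 v) = 0, lsubmx (p2 v) = 0 & p3 v = 0].
Definition Filt j v := if (j < M)%N then Br1 j v
  else if (j <= M + (M + M))%N then Br2 (j - M) v else Br3 (j - M - (M + M)) v.

Lemma step1 j v : Br1 j v -> Br1 j.+1 (v *m D).
Proof.
move=> [[a [Ha Ha']] [b [Hb Hb']]]; split.
  exists (a *m D11); split; first by apply: der_step => //; exact: D11_der.
  by rewrite lsubB L1 -lsubB -mulmxBl; apply: (der_C1 ad1 D11_der).
exists (b *m D22); split; first by apply: der_step => //; exact: D22_der.
by rewrite lsubB L2 -lsubB -mulmxBl; apply: (der_C1 ad2 D22_der).
Qed.
Lemma conv12 v : Br1 M v -> Br2 0 v.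
Proof.
move=> [[a [Ha Ha']] [b [Hb Hb']]].
rewrite (HA Ha) subr0 in Ha'; rewrite (HB Hb) subr0 in Hb'; split => //; exact: G3_0.
Qed.
Lemma step2 k v : Br2 k v -> Br2 k.+1 (v *m D).
Proof.
move=> [h1 h2 h3]; split.
- by rewrite L1; apply: (der_C1 ad1 D11_der).
- by rewrite L2; apply: (der_C1 ad2 D22_der).
have [_ _ g] := K3 h3.
by rewrite {1}(decomp v) !mulmxDl !p3D (K1 h1).2 (K2 h2).2 !add0r.
Qed.
Lemma conv23 v : Br2 (M + M) v -> Br3 0 v.
Proof. by move=> [h1 h2 h3]; split => //; exact: G3_top. Qed.
Lemma step3 i v : Br3 i v -> Br3 i.+1 (v *m D).
Proof.
move=> [a1 b1 h1 h2 h3].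
have e1v : p1 (v *m D) = p1 v *m D11.
  by rewrite {1}(decomp v) h3 e30 addr0 mulmxDl p1D (K2 h2).1 addr0 D11E.
have e2v : p2 (v *m D) = p2 v *m D22.
  by rewrite {1}(decomp v) h3 e30 addr0 mulmxDl p2D (K1 h1).1 add0r D22E.
split.
- by rewrite e1v; apply: der_step => //; exact: D11_der.
- by rewrite e2v; apply: der_step => //; exact: D22_der.
- by rewrite e1v; apply: (der_C1 ad1 D11_der).
- by rewrite e2v; apply: (der_C1 ad2 D22_der).
by rewrite {1}(decomp v) h3 e30 addr0 mulmxDl p3D (K1 h1).2 (K2 h2).2 addr0.
Qed.

Lemma Filt_step j v : Filt j v -> Filt j.+1 (v *m D).
Proof.
rewrite /Filt.
have [h|h] := ltnP j.+1 M.
  by rewrite (ltnW h); exact: step1.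
have [e|ne] := eqVneq j.+1 M.
  have hj : (j < M)%N by rewrite -e.
  have hj' : (j < M + (M + M))%N by lia.
  rewrite hj hj' e subnn => H; apply: conv12; rewrite -e; exact: step1.
have hj : (j < M)%N = false by lia.
rewrite hj.
have [h2|h2] := ltnP j (M + (M + M)).
  rewrite (ltnW h2) => H.
  by rewrite (_ : (j.+1 - M)%N = (j - M).+1); [exact: step2| lia].
have [e2|ne2] := eqVneq j (M + (M + M)).
  rewrite e2 leqnn => H.
  rewrite (_ : ((M + (M + M)).+1 - M - (M + M) = 1)%N); last by lia.
  by apply: step3; apply: conv23; move: H; rewrite (_ : (M + (M + M) - M = M + M)%N) //; lia.
have h3 : (j <= M + (M + M))%N = false by lia.
rewrite h3 => H.
by rewrite (_ : (j.+1 - M - (M + M) = (j - M - (M + M)).+1)%N); [exact: step3| lia].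
Qed.

Lemma Filt_subsp j : subsp (Filt j).
Proof.
have sA := der_iter_subsp br1; have sB := der_iter_subsp br2.
have sG := inspan_subsp (fun z : 'rV[F]_(n1 * n2) => exists a b p q,
  [/\ der_iter br1 p a, der_iter br2 q b, ((j - M) <= p + q)%N & z = mxvec ((lsubmx a)^T *m lsubmx b)]).
rewrite /Filt; case: (j < M)%N.
  split.
    split.
      exists 0; split; first by case: (sA j).
      by rewrite p10 subr0 lsub0.
    exists 0; split; first by case: (sB j).
    by rewrite p20 subr0 lsub0.
  move=> c x y [[a [Ha Ha']] [b [Hb Hb']]] [[a2 [Ha2 Ha2']] [b2 [Hb2 Hb2']]]; split.
    exists (c *: a + a2); split; first by case: (sA j) => _; apply.
    move: Ha' Ha2'; rewrite p1D p1Z !lsubB !lsubD !lsubZ => /eqP; rewrite subr_eq0 => /eqP ->.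
    by move/eqP; rewrite subr_eq0 => /eqP ->; rewrite subrr.
  exists (c *: b + b2); split; first by case: (sB j) => _; apply.
  move: Hb' Hb2'; rewrite p2D p2Z !lsubB !lsubD !lsubZ => /eqP; rewrite subr_eq0 => /eqP ->.
  by move/eqP; rewrite subr_eq0 => /eqP ->; rewrite subrr.
case: (j <= M + (M + M))%N; rewrite /Br2 /Br3.
  split; first by rewrite p10 p20 p30 !lsub0; split => //; case: sG.
  move=> c x y [h1 h2 h3] [h1' h2' h3']; rewrite p1D p1Z p2D p2Z p3D p3Z !lsubD !lsubZ h1 h2 h1' h2' !scaler0 !addr0.
  by split => //; case: sG => _; apply.
split; first by rewrite p10 p20 p30 !lsub0; split => //; [case: (sA (j - M - (M + M))%N)| case: (sB (j - M - (M + M))%N)].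
move=> c x y [a1 b1 h1 h2 h3] [a1' b1' h1' h2' h3']; rewrite p1D p1Z p2D p2Z p3D p3Z !lsubD !lsubZ h1 h2 h3 h1' h2' h3' !scaler0 !addr0.
by split => //; [case: (sA (j - M - (M + M))%N) => _; apply| case: (sB (j - M - (M + M))%N) => _; apply].
Qed.

Lemma Filt_0 v : Filt 0 v.
Proof.
rewrite /Filt M0; split; [exists (p1 v)|exists (p2 v)]; by rewrite subrr lsub0.
Qed.

Lemma Filt_end v : Filt (M + (M + M) + M) v -> v = 0.
Proof.
rewrite /Filt (_ : (M + (M + M) + M < M)%N = false); last by lia.
rewrite (_ : (M + (M + M) + M <= M + (M + M))%N = false); last by lia.
rewrite (_ : (M + (M + M) + M - M - (M + M) = M)%N); last by lia.
move=> [a1 b1 _ _ h3]; rewrite (decomp v) (HA a1) (HB b1) h3 e10 e20 e30 !addr0 //.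
Qed.


End Der.

Section Main.
Hypotheses (ad1 : adapted br1) (ad2 : adapted br2).
Variable M : nat.
Hypothesis M0 : (0 < M)%N.
Hypothesis HA : forall a, der_iter br1 M a -> a = 0.
Hypothesis HB : forall b, der_iter br2 M b -> b = 0.
Hypothesis HS : forall D, is_der br D ->
  (forall x, lsubmx (p2 (e1 x *m D)) = 0) /\ (forall y, lsubmx (p1 (e2 y *m D)) = 0).

Lemma der_Filt j v : der_iter br j v -> Filt M j v.
Proof.
elim: j v => [|j IH] v /=; first by move=> _; apply: Filt_0.
apply: inspan_sub; first exact: Filt_subsp.
move=> u [D [y [HD Hy ->]]]; have [S1 S2] := HS HD.
exact: (Filt_step HD ad1 ad2 S1 S2 M0 HA HB (IH _ Hy)).
Qed.

Lemma lcs_prod k v : lcs br k v ->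
  [/\ lcs br1 k (p1 v), lcs br2 k (p2 v) & (1 < k)%N -> p3 v = 0].
Proof.
elim: k v => [|k IH] v; first by [].
have [A0 AH] := lcs_subsp br1 k.+1; have [B0 BH] := lcs_subsp br2 k.+1.
move=> /=; apply: (inspan_sub (Q := fun v => [/\ lcs br1 k.+1 (p1 v), lcs br2 k.+1 (p2 v)
    & (1 < k.+1)%N -> p3 v = 0])).
  split; first by rewrite p10 p20 p30.
  move=> c x y [h1 h2 h3] [h1' h2' h3']; rewrite p1D p1Z p2D p2Z p3D p3Z; split.
  - exact: AH.
  - exact: BH.
  by move=> hk; rewrite h3 // h3' // scaler0 addr0.
move=> u [x [y [Hy ->]]]; have [h1 h2 h3] := IH y Hy; split.
- by rewrite p1_br; apply: inspan_in; exists (p1 x), (p1 y).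
- by rewrite p2_br; apply: inspan_in; exists (p2 x), (p2 y).
move=> hk; have k1 : (1 <= k)%N by lia.
have l1 : lsubmx (p1 y) = 0 by case: ad1 => _ H; apply/H; exact: (lcs_mono k1 h1).
have l2 : lsubmx (p2 y) = 0 by case: ad2 => _ H; apply/H; exact: (lcs_mono k1 h2).
by rewrite p3_br l1 l2 mulmx0 trmx0 mul0mx subr0 mxvec0.
Qed.

Lemma prod_char_nil : nilpotent br1 -> nilpotent br2 -> char_nilpotent br.
Proof.
move=> [k1 H1] [k2 H2]; split.
  exists (maxn k1 k2).+2 => v /lcs_prod [h1 h2 h3].
  have l1 : (k1 <= (maxn k1 k2).+2)%N by lia.
  have l2 : (k2 <= (maxn k1 k2).+2)%N by lia.
  rewrite (decomp v) (H1 _ (lcs_mono l1 h1)) (H2 _ (lcs_mono l2 h2)) h3 //.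
  by rewrite e10 e20 e30 !addr0.
exists (M + (M + M) + M) => v /der_Filt; exact: Filt_end.
Qed.
End Main.

End Prod.

Lemma mxvecN (F : fieldType) m n (A : 'M[F]_(m, n)) : mxvec (- A) = - mxvec A.
Proof. exact: linearN. Qed.
Lemma trmxN (F : fieldType) m n (A : 'M[F]_(m, n)) : (- A)^T = - A^T.
Proof. exact: linearN. Qed.

Section Swap.
Variables (F : fieldType) (n1 r1 n2 r2 : nat).
Local Notation N := (n1 + r1 + (n2 + r2) + n1 * n2)%N.

Definition P3 : 'M[F]_(N, n1 * n2) := col_mx 0 1%:M.
Lemma mulP3 (v : 'rV[F]_N) : v *m P3 = p3 v.
Proof. by rewrite /P3 -{1}[v]hsubmxK mul_row_col mulmx0 mulmx1 add0r. Qed.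

Definition swp : 'M[F]_(N, n2 + r2 + (n1 + r1) + n2 * n1) :=
  row_mx (row_mx (@P2 F n1 r1 n2 r2) (@P1 F n1 r1 n2 r2)) (- (P3 *m lin_mx (@trmx F n1 n2))).

Lemma swpE v : v *m swp = row_mx (row_mx (p2 v) (p1 v)) (- mxvec ((vec_mx (p3 v))^T)).
Proof. by rewrite /swp !mul_mx_row mulP1 mulP2 mulmxN mulmxA mulP3 mul_rV_lin. Qed.

Lemma swp_p1 v : p1 (v *m swp) = p2 v.
Proof. by rewrite swpE /p1 !row_mxKl. Qed.
Lemma swp_p2 v : p2 (v *m swp) = p1 v.
Proof. by rewrite swpE /p2 row_mxKl row_mxKr. Qed.
Lemma swp_p3 v : p3 (v *m swp) = - mxvec ((vec_mx (p3 v))^T).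
Proof. by rewrite swpE /p3 row_mxKr. Qed.

Variables (br1 : 'rV[F]_(n1 + r1) -> 'rV[F]_(n1 + r1) -> 'rV[F]_(n1 + r1))
          (br2 : 'rV[F]_(n2 + r2) -> 'rV[F]_(n2 + r2) -> 'rV[F]_(n2 + r2)).

Lemma swp_br v w : prod_gen br1 br2 v w *m swp = prod_gen br2 br1 (v *m swp) (w *m swp).
Proof.
apply: eqV.
- by rewrite swp_p1 p1_br p2_br !swp_p1.
- by rewrite swp_p2 p2_br p1_br !swp_p2.
rewrite swp_p3 p3_br p3_br !swp_p1 !swp_p2 mxvecK.
rewrite linearB /= !trmx_mul !trmxK -linearN /= opprB.
done.
Qed.

Lemma swp_e1 (y : 'rV[F]_(n1 + r1)) : e1 n2 r2 y *m swp = e2 n2 r2 y.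
Proof.
apply: eqV.
- by rewrite swp_p1 p2e1 p1e2.
- by rewrite swp_p2 p1e1 p2e2.
by rewrite swp_p3 p3e1 p3e2 linear0 trmx0 linear0 oppr0.
Qed.
End Swap.

Lemma swpK (F : fieldType) n1 r1 n2 r2 (y : 'rV[F]_(n2 + r2 + (n1 + r1) + n2 * n1)) :
  y *m @swp F n2 r2 n1 r1 *m @swp F n1 r1 n2 r2 = y.
Proof.
apply: eqV.
- by rewrite swp_p1 swp_p2.
- by rewrite swp_p2 swp_p1.
rewrite swp_p3 swp_p3 -!mxvecN mxvecK trmxN trmxK opprK vec_mxK.
done.
Qed.

Unset Implicit Arguments. Set Strict Implicit. Set Printing Implicit Defensive.

Theorem mainTheorem1 (R : realType) (n1 r1 n2 r2 : nat)
  (br1 : 'rV[CC R]_(n1 + r1) -> 'rV[CC R]_(n1 + r1) -> 'rV[CC R]_(n1 + r1))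
  (br2 : 'rV[CC R]_(n2 + r2) -> 'rV[CC R]_(n2 + r2) -> 'rV[CC R]_(n2 + r2)) :
  nil_lie br1 -> adapted br1 -> char_nilpotent br1 -> S_algebra br1 ->
  nil_lie br2 -> adapted br2 -> char_nilpotent br2 -> S_algebra br2 ->
  char_nilpotent (prod_gen br1 br2).
Proof.
move=> nl1 ad1 [_ [m1 Hm1]] SA1 nl2 ad2 [_ [m2 Hm2]] SA2.
have [L1 N1 _] := nl1; have [L2 N2 _] := nl2.
apply: (prod_char_nil L1 L2 ad1 ad2 (M := (maxn m1 m2).+1)) => //.
- by move=> a Ha; apply: Hm1; apply: der_mono Ha; lia.
- by move=> b Hb; apply: Hm2; apply: der_mono Hb; lia.
move=> D HD; split.
  move=> x; have [_ H] := ad2; apply/H; exact: (SA1 _ _ br2 nl2 ad2 D HD x).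
move=> y.
pose D' := @swp _ n2 r2 n1 r1 *m D *m @swp _ n1 r1 n2 r2.
have HD' : is_der (prod_gen br2 br1) D'.
  move=> u w; rewrite /D' !mulmxA (swp_br br2 br1) HD mulmxDl.
  have k1 := swpK w; have k2 := swpK u.
  have h1 := swp_br br1 br2 (u *m @swp _ n2 r2 n1 r1 *m D) (w *m @swp _ n2 r2 n1 r1).
  have h2 := swp_br br1 br2 (u *m @swp _ n2 r2 n1 r1) (w *m @swp _ n2 r2 n1 r1 *m D).
  congr (_ + _).
  - apply: (etrans h1); congr (prod_gen br2 br1 _ _); exact: k1.
  - apply: (etrans h2); congr (prod_gen br2 br1 _ _); exact: k2.
have HS2 := SA2 _ _ br1 nl1 ad1 D' HD' y.
have E0 : rsubmx (lsubmx (row_mx (row_mx y 0) 0 *m D')) =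
          p2 (e1 n1 r1 y *m @swp _ n2 r2 n1 r1 *m D *m @swp _ n1 r1 n2 r2).
  by rewrite /D' !mulmxA.
have E1 := @swp_e1 _ n2 r2 n1 r1 y.
have E3 := @swp_p2 _ n1 r1 n2 r2 (e2 n1 r1 y *m D).
have E4 := congr1 (fun t => t *m D *m @swp _ n1 r1 n2 r2) E1.
have E2 := etrans (congr1 (@p2 _ n2 r2 n1 r1) E4) E3.
have [_ H] := ad1; apply/H.
exact: (eq_ind _ (lcs br1 1) HS2 _ (etrans E0 E2)).
Qed.
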